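(* Let $\Omega^{+}_{\mathrm{even}}$ (resp. $\Omega^-_{\mathrm{even}}$) be the set of $(b,a,c,|\xi|)\in R$ for which \[ 2\lambda_{\mathrm{even}}[a+c-(b+1)\beta^2]=5\beta(\beta-\lambda_{\mathrm{even}})(\lambda_{\mathrm{even}}-\beta b),\qquad \lambda_{\mathrm{even}}=\frac{5\beta(ab+c-2\beta^2b)}{a+c-(b+1)\beta^2}, \] holds with $\beta=\sqrt{\big(ab+c\pm\sqrt{(c-ab)^2+4|\xi|^2b}\big)/(2b)}$, the sign $+$ (resp. $-$) being used. Then $\Omega^\pm_{\mathrm{even}}$ are non-empty and unbounded, and if $(b,a,c,|\xi|)\in\Omega^\pm_{\mathrm{even}}$ then $(b,ra,rc,r|\xi|)\in\Omega^\pm_{\mathrm{even}}$ for every $r>0$.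
   Context: $R:=\{(b,a,c,|\xi|)\in\mathbb{R}^4: a,c>0,\ b\ge 1,\ 0\le|\xi|^2<ac\}$ parametrizes pairs $A=\begin{pmatrix}a&\xi\\\overline\xi&c\end{pmatrix}$, $B=\begin{pmatrix}1&0\\0&b\end{pmatrix}$ of positive definite matrices. Points considered are those for which the quantities above are defined (in particular $b>1$, $|\xi|>0$). *)

(* Defs.v *)
From Stdlib Require Import Reals.
Open Scope R_scope.

Definition in_region (b a c x : R) : Prop :=
  0 < a /\ 0 < c /\ 1 <= b /\ 0 <= x /\ x ^ 2 < a * c.

Definition beta_pm (pm : bool) (b a c x : R) : R :=
  let s := sqrt ((c - a * b) ^ 2 + 4 * x ^ 2 * b) in
  sqrt ((a * b + c + (if pm then s else - s)) / (2 * b)).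

Definition denom_even (pm : bool) (b a c x : R) : R :=
  a + c - (b + 1) * (beta_pm pm b a c x) ^ 2.

Definition lambda_even (pm : bool) (b a c x : R) : R :=
  let be := beta_pm pm b a c x in
  5 * be * (a * b + c - 2 * be ^ 2 * b) / denom_even pm b a c x.

(* Omega^{+/-}_even: points of the region where all quantities are defined
   (b > 1, |xi| > 0, denominator nonzero) and the equation holds. *)
Definition Omega_even (pm : bool) (b a c x : R) : Prop :=
  in_region b a c x /\ 1 < b /\ 0 < x /\ denom_even pm b a c x <> 0 /\
  let be := beta_pm pm b a c x in
  let la := lambda_even pm b a c x in
  2 * la * denom_even pm b a c x = 5 * be * (be - la) * (la - be * b).

(* Main.v *)
Require Import Defs.
From Stdlib Require Import Reals Lra Psatz.
Open Scope R_scope.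

Lemma sqrt_eq (u v : R) : 0 <= v -> u = v ^ 2 -> sqrt u = v.
Proof. intros H1 H2; subst; now apply sqrt_pow2. Qed.

Lemma beta_scale pm b a c x r : 0 < r -> 0 < b ->
  beta_pm pm b (r * a) (r * c) (r * x) = sqrt r * beta_pm pm b a c x.
Proof.
  intros Hr Hb. unfold beta_pm.
  set (s := sqrt ((c - a * b) ^ 2 + 4 * x ^ 2 * b)).
  assert (Hs : sqrt ((r * c - r * a * b) ^ 2 + 4 * (r * x) ^ 2 * b) = r * s).
  { replace ((r * c - r * a * b) ^ 2 + 4 * (r * x) ^ 2 * b)
      with (r ^ 2 * ((c - a * b) ^ 2 + 4 * x ^ 2 * b)) by ring.
    rewrite sqrt_mult_alt by (apply pow2_ge_0).
    rewrite sqrt_pow2 by lra. reflexivity. }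
  rewrite Hs. rewrite <- sqrt_mult_alt by lra. f_equal.
  destruct pm; field; lra.
Qed.

Lemma scale pm b a c x r : Omega_even pm b a c x -> 0 < r ->
  Omega_even pm b (r * a) (r * c) (r * x).
Proof.
  intros [[Ha [Hc [Hb1 [Hx0 Hx]]]] [Hb [Hx1 [HD Heq]]]] Hr.
  assert (Hq : sqrt r * sqrt r = r) by (apply sqrt_sqrt; lra).
  assert (Hq0 : 0 < sqrt r) by (apply sqrt_lt_R0; lra).
  unfold Omega_even, lambda_even, denom_even in *. cbv zeta in *.
  rewrite beta_scale by lra.
  set (be := beta_pm pm b a c x) in *.
  set (D := a + c - (b + 1) * be ^ 2) in *.
  assert (HD' : r * a + r * c - (b + 1) * (sqrt r * be) ^ 2 = r * D).
  { unfold D. replace ((sqrt r * be) ^ 2) with ((sqrt r * sqrt r) * be ^ 2) by ring.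
    rewrite Hq. ring. }
  rewrite HD'.
  set (la := 5 * be * (a * b + c - 2 * be ^ 2 * b) / D) in *.
  assert (Hla : 5 * (sqrt r * be) * (r * a * b + r * c - 2 * (sqrt r * be) ^ 2 * b) / (r * D)
     = sqrt r * la).
  { unfold la. replace ((sqrt r * be) ^ 2) with ((sqrt r * sqrt r) * be ^ 2) by ring.
    rewrite Hq. field. split; lra. }
  rewrite Hla.
  split; [repeat split; try lra|].
  - apply Rmult_lt_0_compat; lra.
  - apply Rmult_lt_0_compat; lra.
  - apply Rmult_le_pos; lra.
  - replace ((r * x) ^ 2) with (r ^ 2 * x ^ 2) by ring.
    replace (r * a * (r * c)) with (r ^ 2 * (a * c)) by ring.
    apply Rmult_lt_compat_l; [nra | lra].
  - split; [lra|]. split; [apply Rmult_lt_0_compat; lra|].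
    split; [intro H; apply Rmult_integral in H; destruct H; lra|].
    transitivity (r * sqrt r * (2 * la * D)).
    + replace (2 * (sqrt r * la) * (r * D)) with (r * sqrt r * (2 * la * D)) by ring. reflexivity.
    + rewrite Heq. set (q := sqrt r) in *. rewrite <- Hq. ring.
Qed.

Lemma point pm : exists b a c x, Omega_even pm b a c x.
Proof.
  destruct pm.
  - exists 6, (27/40), (123/40), (39/40).
    assert (Hb : beta_pm true 6 (27/40) (123/40) (39/40) = 1).
    { unfold beta_pm. rewrite (sqrt_eq (_ ^ 2 + _) (39/8)) by (simpl; first [lra | field]).
      apply sqrt_eq; simpl; first [lra | field]. }
    unfold Omega_even, lambda_even, denom_even. cbv zeta. rewrite Hb.
    repeat split; try lra; try field.
  - exists 6, (449/440), (3081/440), (63/440).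
    assert (Hb : beta_pm false 6 (449/440) (3081/440) (63/440) = 1).
    { unfold beta_pm. rewrite (sqrt_eq (_ ^ 2 + _) (9/8)) by (simpl; first [lra | field]).
      apply sqrt_eq; simpl; first [lra | field]. }
    unfold Omega_even, lambda_even, denom_even. cbv zeta. rewrite Hb.
    repeat split; try lra; try field.
Qed.

Theorem mainTheorem8 : forall pm : bool,
  (exists b a c x, Omega_even pm b a c x) /\
  (forall M : R, exists b a c x, Omega_even pm b a c x /\
       M < sqrt (b ^ 2 + a ^ 2 + c ^ 2 + x ^ 2)) /\
  (forall b a c x r, Omega_even pm b a c x -> 0 < r ->
       Omega_even pm b (r * a) (r * c) (r * x)).
Proof.
  intro pm. split; [apply point|]. split; [|apply scale].
  intro M. destruct (point pm) as [b [a [c [x H]]]].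
  assert (Ha : 0 < a) by (destruct H as [[? _] _]; lra).
  set (r := (Rabs M + 1) / a).
  assert (Hr : 0 < r) by (unfold r; apply Rdiv_lt_0_compat; [pose proof (Rabs_pos M)|]; lra).
  exists b, (r * a), (r * c), (r * x). split; [now apply scale|].
  assert (Hra : r * a = Rabs M + 1) by (unfold r; field; lra).
  apply Rlt_le_trans with (Rabs M + 1).
  - pose proof (Rle_abs M); lra.
  - rewrite <- (sqrt_pow2 (Rabs M + 1)) by (pose proof (Rabs_pos M); lra).
    apply sqrt_le_1_alt. rewrite <- Hra.
    pose proof (pow2_ge_0 b); pose proof (pow2_ge_0 (r*c)); pose proof (pow2_ge_0 (r*x)); lra.
Qed.
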